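(* Let $v>1$ and consider the plane with two highways $H_x$ (the $x$-axis) and $H_y$ (the $y$-axis) in the $L_1$-metric travel model described in the context. Let $p=(x_p,y_p)$ and $q=(x_q,y_q)$ be two points in the closed first quadrant that both lie on $\mathrm{Side}\text{-}H_x$, i.e. $x_p\ge y_p\ge 0$ and $x_q\ge y_q\ge 0$. Then the time-distance $d(p,q)$ is attained by a path that uses at most one highway, namely $H_x$: either a path that uses no highway at all (so $d(p,q)=|x_p-x_q|+|y_p-y_q|$), or a path that enters $H_x$ once, travels along $H_x$, and leaves $H_x$ once, without using $H_y$. The symmetric statement (with the roles of $x$ and $y$, and of $H_x$ and $H_y$, exchanged) holds for two points on $\mathrm{Side}\text{-}H_y$, i.e. with $y\ge x\ge 0$.
   Context: Travel model: the highways are $H_x=\{(x,0)\}$ and $H_y=\{(0,y)\}$. A path is a rectifiable curve in $\mathbb{R}^2$; its travel time is the $L_1$-length of its portions lying off the highways (speed $1$) plus $1/v$ times the $L_1$-length of its portions travelling along a highway (speed $v>1$). The time-distance $d(p,q)$ is the minimum travel time over all paths from $p$ to $q$; a path attaining it is a shortest time-path, and it ''uses a highway'' $H$ if it travels along a segment of positive length of $H$. The line $x=y$ splits the first quadrant into $\mathrm{Side}\text{-}H_x=\{x\ge y\}$ (the part closer to $H_x$) and $\mathrm{Side}\text{-}H_y=\{x<y\}$ (the part closer to $H_y$). *)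

(* Defs.v *)
From Stdlib Require Import Reals Lra List.
Import ListNotations.
Open Scope R_scope.

Definition pt : Type := (R * R)%type.

Definition l1 (a b : pt) : R := Rabs (fst a - fst b) + Rabs (snd a - snd b).

Definition on_Hx (a : pt) : Prop := snd a = 0.
Definition on_Hy (a : pt) : Prop := fst a = 0.

Definition Req_b (x y : R) : bool := if Req_EM_T x y then true else false.

(* A straight segment [a,b] lies in a highway iff both endpoints lie on the
   same highway (a segment containing a positive-length piece of an axis lies
   on that axis). Such a segment is travelled at speed v; otherwise at speed 1
   (meeting a highway in at most one point does not count as using it). *)
Definition seg_in_Hx (a b : pt) : bool := andb (Req_b (snd a) 0) (Req_b (snd b) 0).
Definition seg_in_Hy (a b : pt) : bool := andb (Req_b (fst a) 0) (Req_b (fst b) 0).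

Definition seg_time (v : R) (a b : pt) : R :=
  if orb (seg_in_Hx a b) (seg_in_Hy a b) then l1 a b / v else l1 a b.

Fixpoint poly_time (v : R) (a : pt) (l : list pt) : R :=
  match l with
  | [] => 0
  | b :: l' => seg_time v a b + poly_time v b l'
  end.

Definition travel_time (v : R) (p : pt) (m : list pt) (q : pt) : R :=
  poly_time v p (m ++ [q]).

(* m describes a shortest time-path from p to q: its travel time is minimal
   among all paths from p to q (so it equals d(p,q)). *)
Definition shortest_time_path (v : R) (p : pt) (m : list pt) (q : pt) : Prop :=
  forall m' : list pt, travel_time v p m q <= travel_time v p m' q.

Fixpoint poly_uses_Hx (a : pt) (l : list pt) : Prop :=
  match l with
  | [] => False
  | b :: l' => (a <> b /\ on_Hx a /\ on_Hx b) \/ poly_uses_Hx b l'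
  end.
Fixpoint poly_uses_Hy (a : pt) (l : list pt) : Prop :=
  match l with
  | [] => False
  | b :: l' => (a <> b /\ on_Hy a /\ on_Hy b) \/ poly_uses_Hy b l'
  end.

Definition uses_Hx (p : pt) (m : list pt) (q : pt) : Prop := poly_uses_Hx p (m ++ [q]).
Definition uses_Hy (p : pt) (m : list pt) (q : pt) : Prop := poly_uses_Hy p (m ++ [q]).

Definition side_Hx (a : pt) : Prop := 0 <= snd a <= fst a.
Definition side_Hy (a : pt) : Prop := 0 <= fst a <= snd a.

(* Main.v *)
Require Import Defs.
From Stdlib Require Import Reals List Lra Psatz.
Import ListNotations.
Open Scope R_scope.

Section LB.
Variable w : R.
Variables qx qy : R.

Definition T1 (a : pt) := Rabs (fst a - qx) + Rabs (snd a - qy).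
Definition T2 (a : pt) := Rabs (snd a) + w * Rabs (fst a - qx) + Rabs qy.
Definition T3 (a : pt) := Rabs (fst a) + w * Rabs (snd a - qy) + Rabs qx.
Definition T4 (a : pt) := Rabs (fst a) + w * Rabs (snd a) + w * Rabs qx + Rabs qy.
Definition T5 (a : pt) := Rabs (snd a) + w * Rabs (fst a) + w * Rabs qy + Rabs qx.
Definition F (a : pt) := Rmin (T1 a) (Rmin (T2 a) (Rmin (T3 a) (Rmin (T4 a) (T5 a)))).

Lemma F_ge a : F a <= T1 a /\ F a <= T2 a /\ F a <= T3 a /\ F a <= T4 a /\ F a <= T5 a.
Proof. unfold F, Rmin; repeat destruct Rle_dec; lra. Qed.

Lemma F_eq a : F a = T1 a \/ F a = T2 a \/ F a = T3 a \/ F a = T4 a \/ F a = T5 a.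
Proof. unfold F, Rmin; repeat destruct Rle_dec; tauto. Qed.
End LB.

Lemma tri a b c : Rabs (a - c) <= Rabs (a - b) + Rabs (b - c).
Proof. replace (a - c) with ((a - b) + (b - c)) by ring. apply Rabs_triang. Qed.
Lemma tri0 a b : Rabs a <= Rabs (a - b) + Rabs b.
Proof. replace a with ((a - b) + b) at 1 by ring. apply Rabs_triang. Qed.
Lemma wtri w a b c : 0 <= w -> w * Rabs (a - c) <= w * Rabs (a - b) + w * Rabs (b - c).
Proof. intros; rewrite <- Rmult_plus_distr_l; apply Rmult_le_compat_l; auto; apply tri. Qed.
Lemma wtri0 w a b : 0 <= w -> w * Rabs a <= w * Rabs (a - b) + w * Rabs b.
Proof. intros; rewrite <- Rmult_plus_distr_l; apply Rmult_le_compat_l; auto; apply tri0. Qed.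
Lemma wtriS w a c : 0 <= w -> w * Rabs (a - c) <= w * Rabs a + w * Rabs c.
Proof. intros; rewrite <- Rmult_plus_distr_l; apply Rmult_le_compat_l; auto.
  unfold Rminus; rewrite <- (Rabs_Ropp c); apply Rabs_triang. Qed.
Lemma wle w x : 0 <= w <= 1 -> 0 <= w * Rabs x <= Rabs x.
Proof. intros. pose proof (Rabs_pos x). split; nra. Qed.

Lemma Req_b_true x y : Req_b x y = true -> x = y.
Proof. unfold Req_b; destruct Req_EM_T; congruence. Qed.

Lemma step v qx qy a b : 1 < v ->
  F (/v) qx qy a <= seg_time v a b + F (/v) qx qy b.
Proof.
  intros hv.
  assert (hw : 0 <= /v <= 1).
  { split. left; apply Rinv_0_lt_compat; lra.
    rewrite <- Rinv_1; left; apply Rinv_lt_contravar; lra. }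
  set (w := /v) in *.
  destruct a as [ax ay], b as [bx b_y].
  pose proof (F_ge w qx qy (ax, ay)) as G.
  destruct (F_eq w qx qy (bx, b_y)) as [E|[E|[E|[E|E]]]]; rewrite E; clear E;
  unfold T1, T2, T3, T4, T5 in *; unfold seg_time, l1, seg_in_Hx, seg_in_Hy in *;
  simpl in *;
  pose proof (tri ax bx qx); pose proof (tri ay b_y qy);
  pose proof (tri0 ax bx); pose proof (tri0 ay b_y);
  pose proof (wtri w ax bx qx ltac:(lra)); pose proof (wtri w ay b_y qy ltac:(lra));
  pose proof (wtri0 w ax bx ltac:(lra)); pose proof (wtri0 w ay b_y ltac:(lra));
  pose proof (wle w (ax - bx) hw); pose proof (wle w (ay - b_y) hw);
  pose proof (wle w ax hw); pose proof (wle w ay hw);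
  pose proof (wle w bx hw); pose proof (wle w b_y hw);
  pose proof (wle w (ax - qx) hw); pose proof (wle w (ay - qy) hw);
  pose proof (wle w (bx - qx) hw); pose proof (wle w (b_y - qy) hw);
  pose proof (wle w qx hw); pose proof (wle w qy hw);
  pose proof (wtriS w ax qx ltac:(lra)); pose proof (wtriS w bx qx ltac:(lra));
  pose proof (wtriS w ay qy ltac:(lra)); pose proof (wtriS w b_y qy ltac:(lra));
  unfold Rdiv; fold w;
  (destruct (Req_b ay 0) eqn:E1; destruct (Req_b b_y 0) eqn:E2;
   destruct (Req_b ax 0) eqn:E3; destruct (Req_b bx 0) eqn:E4; simpl;
   repeat match goal with H : Req_b _ _ = true |- _ => apply Req_b_true in H; subst end;
   repeat rewrite ?Rminus_0_l, ?Rminus_0_r, ?Rabs_Ropp, ?Rabs_R0, ?Rmult_0_r in *;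
   lra).
Qed.

Lemma lower v qx qy : 1 < v -> forall l a,
  F (/v) qx qy a <= poly_time v a (l ++ [(qx, qy)]).
Proof.
  intros hv l; induction l as [|b l IH]; intros a; simpl.
  - pose proof (step v qx qy a (qx, qy) hv).
    pose proof (F_ge (/v) qx qy (qx, qy)) as G. unfold T1 in G; simpl in G.
    rewrite !Rminus_diag, Rabs_R0 in G. lra.
  - pose proof (step v qx qy a b hv). pose proof (IH b). lra.
Qed.

Lemma Req_b_refl x : Req_b x x = true.
Proof. unfold Req_b; destruct Req_EM_T; congruence. Qed.

Lemma seg_le v a b : 1 < v -> 0 <= seg_time v a b <= l1 a b.
Proof.
  intros hv. assert (0 <= l1 a b) by (unfold l1; pose proof (Rabs_pos (fst a - fst b));
    pose proof (Rabs_pos (snd a - snd b)); lra).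
  unfold seg_time. destruct orb.
  - split. unfold Rdiv; apply Rmult_le_pos; [lra|left; apply Rinv_0_lt_compat; lra].
    apply Rmult_le_reg_r with v; [lra|]. unfold Rdiv; rewrite Rmult_assoc, Rinv_l; nra.
  - lra.
Qed.

Lemma seg_Hx v x y : seg_time v (x, 0) (y, 0) = l1 (x, 0) (y, 0) / v.
Proof. unfold seg_time, seg_in_Hx; simpl; rewrite Req_b_refl; reflexivity. Qed.
Lemma seg_Hy v x y : seg_time v (0, x) (0, y) = l1 (0, x) (0, y) / v.
Proof. unfold seg_time, seg_in_Hx, seg_in_Hy; simpl; rewrite Req_b_refl; destruct (Req_b x 0), (Req_b y 0); reflexivity. Qed.

Lemma part1 v (hv : 1 < v) p q : side_Hx p -> side_Hx q ->
     exists m : list pt,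
       shortest_time_path v p m q /\ ~ uses_Hy p m q /\
       (~ uses_Hx p m q \/ exists a b : R, m = [(a, 0); (b, 0)]).
Proof.
  destruct p as [xp yp], q as [xq yq]; unfold side_Hx; simpl; intros Hp Hq.
  assert (hw : 0 < /v <= 1).
  { split. apply Rinv_0_lt_compat; lra.
    rewrite <- Rinv_1; left; apply Rinv_lt_contravar; lra. }
  set (T0 := travel_time v (xp, yp) [] (xq, yq)).
  set (Tm := travel_time v (xp, yp) [(xp, 0); (xq, 0)] (xq, yq)).
  assert (LB : forall m', Rmin T0 Tm <= travel_time v (xp, yp) m' (xq, yq)).
  { intros m'. eapply Rle_trans; [|apply lower; exact hv].
    pose proof (F_ge (/v) xq yq (xp, yp)) as G.
    destruct (F_eq (/v) xq yq (xp, yp)) as [E|[E|[E|[E|E]]]]; rewrite E; clear E;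
    unfold T1, T2, T3, T4, T5 in *; simpl in *;
    assert (A0 : T0 <= Rabs (xp - xq) + Rabs (yp - yq))
      by (unfold T0, travel_time; simpl; pose proof (seg_le v (xp,yp) (xq,yq) hv);
          unfold l1 in *; simpl in *; lra);
    assert (A1 : Tm <= Rabs yp + /v * Rabs (xp - xq) + Rabs yq)
      by (unfold Tm, travel_time; simpl; rewrite seg_Hx;
          pose proof (seg_le v (xp,yp) (xp,0) hv); pose proof (seg_le v (xq,0) (xq,yq) hv);
          unfold l1 in *; simpl in *; rewrite Rminus_diag, Rminus_0_r, Rminus_0_l, Rabs_R0, Rabs_Ropp in *;
          unfold Rdiv; rewrite Rplus_0_r; lra);
    pose proof (Rmin_l T0 Tm); pose proof (Rmin_r T0 Tm); try lra;
    revert G A0 A1; unfold Rabs; repeat destruct Rcase_abs; intros; nra. }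
  destruct (Rle_lt_dec Tm T0) as [H|H].
  - exists [(xp, 0); (xq, 0)]. split; [|split].
    + intros m'. pose proof (LB m'). unfold Rmin in *. destruct Rle_dec; fold Tm; lra.
    + unfold uses_Hy, on_Hy; simpl. intuition; simpl in *; subst. all: unfold on_Hy in *; simpl in *; subst;
      match goal with H : _ = _ -> False |- _ => apply H end; f_equal; lra.
    + right; eauto.
  - exists []. split; [|split].
    + intros m'. pose proof (LB m'). unfold Rmin in *. destruct Rle_dec; fold T0; lra.
    + unfold uses_Hy; simpl. intuition; unfold on_Hy in *; simpl in *; subst;
      match goal with H : _ = _ -> False |- _ => apply H end; f_equal; lra.
    + left. unfold uses_Hx, on_Hx; simpl. intros [[Hne [E1 E2]]|[]]; unfold on_Hx in *; simpl in *; subst.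
      unfold Tm, T0, travel_time in H; simpl in H.
      pose proof (seg_le v (xp,0) (xp,0) hv); pose proof (seg_le v (xq,0) (xq,0) hv).
      unfold l1 in *; simpl in *; rewrite !Rminus_diag, Rabs_R0 in *. lra.
Qed.

Lemma part2 v (hv : 1 < v) p q : side_Hy p -> side_Hy q ->
     exists m : list pt,
       shortest_time_path v p m q /\ ~ uses_Hx p m q /\
       (~ uses_Hy p m q \/ exists a b : R, m = [(0, a); (0, b)]).
Proof.
  destruct p as [xp yp], q as [xq yq]; unfold side_Hy; simpl; intros Hp Hq.
  assert (hw : 0 < /v <= 1).
  { split. apply Rinv_0_lt_compat; lra.
    rewrite <- Rinv_1; left; apply Rinv_lt_contravar; lra. }
  set (T0 := travel_time v (xp, yp) [] (xq, yq)).
  set (Tm := travel_time v (xp, yp) [(0, yp); (0, yq)] (xq, yq)).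
  assert (LB : forall m', Rmin T0 Tm <= travel_time v (xp, yp) m' (xq, yq)).
  { intros m'. eapply Rle_trans; [|apply lower; exact hv].
    pose proof (F_ge (/v) xq yq (xp, yp)) as G.
    destruct (F_eq (/v) xq yq (xp, yp)) as [E|[E|[E|[E|E]]]]; rewrite E; clear E;
    unfold T1, T2, T3, T4, T5 in *; simpl in *;
    assert (A0 : T0 <= Rabs (xp - xq) + Rabs (yp - yq))
      by (unfold T0, travel_time; simpl; pose proof (seg_le v (xp,yp) (xq,yq) hv);
          unfold l1 in *; simpl in *; lra);
    assert (A1 : Tm <= Rabs xp + /v * Rabs (yp - yq) + Rabs xq)
      by (unfold Tm, travel_time; simpl; rewrite seg_Hy;
          pose proof (seg_le v (xp,yp) (0,yp) hv); pose proof (seg_le v (0,yq) (xq,yq) hv);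
          unfold l1 in *; simpl in *; rewrite Rminus_diag, Rminus_0_r, Rminus_0_l, Rabs_R0, Rabs_Ropp in *;
          unfold Rdiv; rewrite Rplus_0_l; lra);
    pose proof (Rmin_l T0 Tm); pose proof (Rmin_r T0 Tm); try lra;
    revert G A0 A1; unfold Rabs; repeat destruct Rcase_abs; intros; nra. }
  destruct (Rle_lt_dec Tm T0) as [H|H].
  - exists [(0, yp); (0, yq)]. split; [|split].
    + intros m'. pose proof (LB m'). unfold Rmin in *. destruct Rle_dec; fold Tm; lra.
    + unfold uses_Hx; simpl. intuition; unfold on_Hx in *; simpl in *; subst;
      match goal with H : _ = _ -> False |- _ => apply H end; f_equal; lra.
    + right; eauto.
  - exists []. split; [|split].
    + intros m'. pose proof (LB m'). unfold Rmin in *. destruct Rle_dec; fold T0; lra.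
    + unfold uses_Hx; simpl. intuition; unfold on_Hx in *; simpl in *; subst;
      match goal with H : _ = _ -> False |- _ => apply H end; f_equal; lra.
    + left. unfold uses_Hy, on_Hy; simpl. intros [[Hne [E1 E2]]|[]]; unfold on_Hy in *; simpl in *; subst.
      unfold Tm, T0, travel_time in H; simpl in H.
      pose proof (seg_le v (0,yp) (0,yp) hv); pose proof (seg_le v (0,yq) (0,yq) hv).
      unfold l1 in *; simpl in *; rewrite !Rminus_diag, Rabs_R0 in *. lra.
Qed.

Theorem mainTheorem1 (v : R) (hv : 1 < v) :
  (forall p q : pt, side_Hx p -> side_Hx q ->
     exists m : list pt,
       shortest_time_path v p m q /\ ~ uses_Hy p m q /\
       (~ uses_Hx p m q \/ exists a b : R, m = [(a, 0); (b, 0)])) /\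
  (forall p q : pt, side_Hy p -> side_Hy q ->
     exists m : list pt,
       shortest_time_path v p m q /\ ~ uses_Hx p m q /\
       (~ uses_Hy p m q \/ exists a b : R, m = [(0, a); (0, b)])).
Proof. split; [apply part1 | apply part2]; exact hv. Qed.
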